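(* For every integer $n\ge 0$, $$\Phi^{(3)}[a, a'; bq^n, b'; c; x, y] = \sum_{k=0}^n \begin{bmatrix} n \\ k \end{bmatrix} q^{2\binom{k}{2}} \frac{(bx)^k (a; q)_k}{(c; q)_k} \Phi^{(3)}[aq^k, a'; bq^k, b'; cq^k; x, y]$$ and $$\Phi^{(3)}[a, a'; bq^{-n}, b'; c; x, y] = \sum_{k=0}^n \begin{bmatrix} n \\ k \end{bmatrix} q^{\binom{k}{2} - nk} \frac{(-bx)^k (a; q)_k}{(c; q)_k} \Phi^{(3)}[aq^k, a'; b, b'; cq^k; x, y].$$
   Context: Let $q$ be a complex number with $0<|q|<1$. For complex $z$ and integer $m\ge 0$, $(z;q)_m=\prod_{j=0}^{m-1}(1-zq^j)$, with $(z;q)_0=1$. For integers $0\le k\le n$, $\begin{bmatrix} n \\ k \end{bmatrix}=\frac{(q;q)_n}{(q;q)_k(q;q)_{n-k}}$ is the $q$-binomial coefficient. The $q$-Appell function $\Phi^{(3)}$ is $$\Phi^{(3)}[a, a'; b, b'; c; x, y] = \sum_{m, n \geq 0} \frac{(a; q)_m (a'; q)_n (b; q)_m (b'; q)_n}{(q; q)_m (q; q)_n (c; q)_{m+n}} x^m y^n.$$ Identities are understood as identities of power series in $x,y$ (formal, or convergent for small $|x|,|y|$), with complex parameters chosen so that no denominator occurring vanishes. *)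

(* Defs.v *)
From HB Require Import structures.
From mathcomp Require Import all_boot all_order all_algebra.
From mathcomp Require Import complex.
From mathcomp Require Import reals.
Set Implicit Arguments. Unset Strict Implicit. Unset Printing Implicit Defensive.
Import Order.TTheory GRing.Theory Num.Theory.
Local Open Scope ring_scope.

Section Defs.
Variable (K : fieldType).

Definition qpoch (z q : K) (m : nat) : K := \prod_(j < m) (1 - z * q ^+ j).

Definition qbinom (q : K) (n k : nat) : K :=
  qpoch q q n / (qpoch q q k * qpoch q q (n - k)).

(* formal power series in two variables x, y : coefficient of x^m y^n *)
Definition fps2 := nat -> nat -> K.

Definition fps2_mul (F G : fps2) : fps2 := fun m n =>
  \sum_(i < m.+1) \sum_(j < n.+1) F i j * G (m - i)%N (n - j)%N.

Definition fps2_xmon (c : K) (k : nat) : fps2 := fun m n =>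
  if (m == k) && (n == 0%N) then c else 0.

Definition Phi3 (q a a' b b' c : K) : fps2 := fun m n =>
  (qpoch a q m * qpoch a' q n * qpoch b q m * qpoch b' q n)
  / (qpoch q q m * qpoch q q n * qpoch c q (m + n)).
End Defs.

(* Main.v *)
Require Import Defs.
From HB Require Import structures.
From mathcomp Require Import all_boot all_order all_algebra.
From mathcomp Require Import complex.
From mathcomp Require Import reals.
From mathcomp Require Import ring zify.
From Stdlib Require Import FunctionalExtensionality.
Import Order.TTheory GRing.Theory Num.Theory.
Local Open Scope ring_scope.
Section Alg.
Variable K : fieldType.
Variable q : K.

Definition qf (m k : nat) : K := \prod_(j < k) (1 - q ^+ (m - j)).

Fixpoint gauss (n k : nat) : K :=
  match n, k with
  | _, 0 => 1
  | 0, _.+1 => 0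
  | n'.+1, k'.+1 => gauss n' k' + q ^+ k'.+1 * gauss n' k'.+1
  end.

Lemma qpoch0 z : qpoch z q 0 = 1.
Proof. by rewrite /qpoch big_ord0. Qed.

Lemma qpochS z m : qpoch z q m.+1 = qpoch z q m * (1 - z * q ^+ m).
Proof. by rewrite /qpoch big_ord_recr. Qed.

Lemma qpochSl z m : qpoch z q m.+1 = (1 - z) * qpoch (z * q) q m.
Proof.
rewrite /qpoch big_ord_recl /= expr0 mulr1; congr (_ * _).
by apply: eq_bigr => i _; rewrite ?lift0 exprS mulrA.
Qed.

Lemma qpochD z k j : qpoch z q (k + j) = qpoch z q k * qpoch (z * q ^+ k) q j.
Proof.
rewrite /qpoch big_split_ord /=; congr (_ * _).
by apply: eq_bigr => i _; rewrite /= exprD mulrA.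
Qed.

Lemma rel z j : qpoch (z * q) q j = qpoch z q j + z * (1 - q ^+ j) * qpoch (z * q) q j.-1.
Proof.
case: j => [|j]; first by rewrite !qpoch0 expr0 subrr mulr0 mul0r addr0.
rewrite (qpochSl z j) (qpochS (z * q) j) /= exprS; ring.
Qed.

Lemma relm z j : qpoch z q j = qpoch (z * q) q j - z * (1 - q ^+ j) * qpoch (z * q) q j.-1.
Proof. by rewrite [in RHS]rel addrK. Qed.

Lemma gauss0 n : gauss n 0 = 1.
Proof. by case: n. Qed.

Lemma gauss_gt n k : (n < k)%N -> gauss n k = 0.
Proof.
elim: n k => [|n IH] [|k] //= H.
by rewrite !IH ?mulr0 ?addr0 //; lia.
Qed.

Lemma gauss_L n k : gauss n k.+1 * (1 - q ^+ k.+1) = gauss n k * (1 - q ^+ (n - k)).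
Proof.
elim: n k => [|n IH] k.
  by case: k => [|k] /=; rewrite ?sub0n ?expr0 ?subrr ?mulr0 ?mul0r.
case: k => [|k].
  rewrite /= !gauss0 subn0.
  have IH0 := IH 0%N; rewrite gauss0 subn0 in IH0.
  transitivity ((1 - q) + q * (gauss n 1 * (1 - q ^+ 1))); first by rewrite expr1; ring.
  by rewrite IH0 exprS; ring.
rewrite [gauss n.+1 k.+2]/= [gauss n.+1 k.+1]/= subSS.
case: (ltnP k n) => hk.
  have [d ed] : exists d, n = (k + d.+1)%N by exists (n - k.+1)%N; lia.
  subst n.
  have H1 := IH k.+1; have H2 := IH k.
  have -> : (k + d.+1 - k = d.+1)%N by lia.
  have e : (k + d.+1 - k.+1 = d)%N by lia.
  rewrite e in H1. have e' : (k + d.+1 - k = d.+1)%N by lia.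
  rewrite e' in H2.
  set A := gauss _ k.+2 in H1 *; set B := gauss _ k.+1 in H1 H2 *; set C := gauss _ k in H2 *.
  transitivity (B * (1 - q ^+ k.+2) + q ^+ k.+2 * (A * (1 - q ^+ k.+2))); first by ring.
  rewrite H1.
  transitivity (C * (1 - q ^+ d.+1) + q ^+ k.+1 * B * (1 - q ^+ d.+1)); last by ring.
  rewrite -H2 !exprS; ring.
rewrite (gauss_gt n k.+2) ?(gauss_gt n k.+1); [|lia|lia].
have -> : (n - k = 0)%N by lia.
by rewrite expr0 subrr !mulr0 ?addr0 ?mul0r.
Qed.

Lemma pascal2 n k : gauss n.+1 k.+1 = gauss n k.+1 + q ^+ (n - k) * gauss n k.
Proof.
have H := gauss_L n k.
rewrite /=.
have -> : gauss n k + q ^+ k.+1 * gauss n k.+1 =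
  gauss n k.+1 + q ^+ (n - k) * gauss n k +
  (gauss n k * (1 - q ^+ (n - k)) - gauss n k.+1 * (1 - q ^+ k.+1)) by ring.
by rewrite H subrr addr0.
Qed.

Lemma gauss_closed n k : (k <= n)%N ->
  gauss n k * qpoch q q k * qpoch q q (n - k) = qpoch q q n.
Proof.
elim: n k => [|n IH] [|k] //= hk.
- by rewrite qpoch0 !mul1r.
- by rewrite ?gauss0 qpoch0 ?subn0 !mul1r.
rewrite subSS.
case: (ltnP k n) => hkn.
  have [d ed] : exists d, n = (k + d.+1)%N by exists (n - k.+1)%N; lia.
  have H1 := IH k.+1 hkn; have H2 := IH k (ltnW hkn).
  have e1 : (n - k = d.+1)%N by lia.
  have e2 : (n - k.+1 = d)%N by lia.
  rewrite e2 in H1; rewrite e1 in H2 *.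
  rewrite qpochS in H1.
  rewrite [qpoch q q k.+1]qpochS [qpoch q q d.+1]qpochS [qpoch q q n.+1]qpochS.
  rewrite qpochS in H2.
  transitivity ((gauss n k * qpoch q q k * (qpoch q q d * (1 - q * q ^+ d))) * (1 - q * q ^+ k)
     + q ^+ k.+1 * (gauss n k.+1 * (qpoch q q k * (1 - q * q ^+ k)) * qpoch q q d) * (1 - q * q^+ d)).
    by ring.
  have En : q * q ^+ n = q ^+ k.+1 * (q * q ^+ d) by rewrite ed -!exprS -exprD addSn.
  rewrite H1 H2 En exprS; ring.
have ekn : k = n by apply/eqP; rewrite eqn_leq hkn -ltnS hk.
subst k.
rewrite (gauss_gt n n.+1) // mulr0 addr0 subnn qpoch0 mulr1.
have := IH n (leqnn n); rewrite subnn qpoch0 mulr1 => H.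
by rewrite !qpochS mulrA H.
Qed.

Lemma qfS m k : qf m k.+1 = qf m k * (1 - q ^+ (m - k)).
Proof. by rewrite /qf big_ord_recr. Qed.

Lemma qf0 m : qf m 0 = 1.
Proof. by rewrite /qf big_ord0. Qed.

Lemma qf_gt m k : (m < k)%N -> qf m k = 0.
Proof.
elim: k => [|k IH] //= hk.
rewrite qfS; case: (ltnP m k) => h; first by rewrite IH ?mul0r.
have -> : (m - k = 0)%N by lia.
by rewrite expr0 subrr mulr0.
Qed.

Lemma Qsplit m k : (k <= m)%N -> qpoch q q m = qpoch q q (m - k) * qf m k.
Proof.
elim: k => [|k IH] hk; first by rewrite subn0 qf0 mulr1.
rewrite IH; last by lia.
have [d [e1 e2]] : exists d, (m - k = d.+1 /\ m - k.+1 = d)%N by exists (m - k.+1)%N; lia.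
by rewrite qfS e1 e2 qpochS -exprS; ring.
Qed.

Lemma identI n b m : qpoch (b * q ^+ n) q m =
  \sum_(k < n.+1) gauss n k * qf m k * q ^+ (2 * 'C(k, 2)) * b ^+ k * qpoch (b * q ^+ k) q (m - k).
Proof.
elim: n b => [|n IH] b.
  by rewrite big_ord_recl big_ord0 /= qf0 !expr0 subn0 !mulr1 !mul1r addr0.
rewrite exprS mulrA IH.
have E : forall k : nat, qpoch (b * q * q ^+ k) q (m - k) = qpoch (b * q ^+ k) q (m - k)
   + b * q ^+ k * (1 - q ^+ (m - k)) * qpoch (b * q ^+ k.+1) q (m - k.+1).
  move=> k; have := rel (b * q ^+ k) (m - k).
  by rewrite -[b * q ^+ k * q]mulrA -exprSr -[b * q * q ^+ k]mulrA -exprS subnS.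
under eq_bigr => k _ do rewrite E mulrDr.
rewrite big_split.
rewrite [in RHS]big_ord_recl.
under [in RHS]eq_bigr => i _ do rewrite lift0 [gauss n.+1 i.+1]/= !mulrDl.
rewrite [in RHS]big_split [RHS]addrCA [LHS]addrC.
congr (_ + _).
  apply: eq_bigr => i _.
  rewrite qfS binS bin1 !mul2n -!addnn !exprD exprMn !exprS; ring.
rewrite big_ord_recl; under [in LHS]eq_bigr => i _ do rewrite lift0.
rewrite [X in _ = _ + X]big_ord_recr /= (gauss_gt n n.+1) // !mulr0 !mul0r addr0.
congr (_ + _); first by rewrite !gauss0 !expr0.
apply: eq_bigr => i _; rewrite exprMn !exprS; ring.
Qed.

Lemma identII n B m : qpoch B q m =
  \sum_(k < n.+1) gauss n k * qf m k * q ^+ 'C(k, 2) * (- B) ^+ k * qpoch (B * q ^+ n) q (m - k).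
Proof.
elim: n => [|n IH].
  by rewrite big_ord_recl big_ord0 /= qf0 !expr0 subn0 !mulr1 !mul1r addr0.
rewrite {1}IH.
under eq_bigr => k _ do rewrite (relm (B * q ^+ n)) -[B * q ^+ n * q]mulrA -exprSr -subnS mulrBr.
rewrite sumrB.
rewrite [in RHS]big_ord_recl.
under [in RHS]eq_bigr => i _ do rewrite lift0 pascal2 !mulrDl.
rewrite [in RHS]big_split /= addrA.
congr (_ + _).
  rewrite big_ord_recl; under [in LHS]eq_bigr => i _ do rewrite lift0.
  rewrite [X in _ = _ + X]big_ord_recr /= (gauss_gt n n.+1) // !mul0r addr0 gauss0.
  by [].
rewrite -sumrN; apply: eq_bigr => i _.
have hi : (i <= n)%N by rewrite -ltnS.
have -> : q ^+ n = q ^+ (n - i) * q ^+ i by rewrite -exprD subnK.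
rewrite qfS binS bin1 exprD !exprS; ring.
Qed.

End Alg.
Section Aux.
Variable K : fieldType.

Lemma xmon_mul (c : K) k (G : fps2 K) m l :
  fps2_mul (fps2_xmon c k) G m l = if (k <= m)%N then c * G (m - k)%N l else 0.
Proof.
rewrite /fps2_mul /fps2_xmon.
have E : forall i : 'I_m.+1, \sum_(j < l.+1) (if (i == k :> nat) && (j == 0%N :> nat) then c else 0) * G (m - i)%N (l - j)%N = if i == k :> nat then c * G (m - i)%N l else 0.
  move=> i; rewrite big_ord_recl /= andbT big1 ?addr0 ?subn0; first by case: eqP => _; rewrite ?mul0r.
  by move=> j _; rewrite andbF mul0r.
rewrite (eq_bigr _ (fun i _ => E i)) -big_mkcond /= (big_ord1_eq _ (fun j => c * G (m - j)%N l)) ltnS.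
by [].
Qed.

Lemma qbinom_gauss (q : K) n k : (forall j, qpoch q q j != 0) -> (k <= n)%N ->
  qbinom q n k = gauss _ q n k.
Proof.
move=> Q hk; rewrite /qbinom -(gauss_closed _ q _ _ hk).
by field; rewrite Q Q.
Qed.

Lemma qpochDk (q z : K) k m : (k <= m)%N -> qpoch z q m = qpoch z q k * qpoch (z * q ^+ k) q (m - k).
Proof. by move=> h; rewrite -qpochD subnKC. Qed.

Lemma qpochDc (q z : K) k m l : (k <= m)%N ->
  qpoch z q (m + l) = qpoch z q k * qpoch (z * q ^+ k) q (m - k + l).
Proof. by move=> h; rewrite -qpochD addnA subnKC. Qed.

End Aux.

Lemma Qnz (R : realType) (q : R[i]) : `|q| < 1 -> forall j, qpoch q q j != 0.
Proof.
move=> h j; apply/prodf_neq0 => i _; rewrite subr_eq0; apply/eqP => E.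
have : `|q * q ^+ i| < 1 by rewrite -exprS normrX exprn_ilt1.
by rewrite -E normr1 ltxx.
Qed.

Theorem theorem12 (R : realType) (q a a' b b' c : R[i]) (n : nat) :
  0 < `|q| -> `|q| < 1 ->
  (forall j : nat, qpoch c q j != 0) ->
  (Phi3 q a a' (b * q ^+ n) b' c =
     (fun m l => \sum_(k < n.+1)
        fps2_mul
          (fps2_xmon (qbinom q n k * q ^+ (2 * 'C(k, 2))
                        * b ^+ k * qpoch a q k / qpoch c q k) k)
          (Phi3 q (a * q ^+ k) a' (b * q ^+ k) b' (c * q ^+ k)) m l))
  /\
  (Phi3 q a a' (b * q ^- n) b' c =
     (fun m l => \sum_(k < n.+1)
        fps2_mul
          (fps2_xmon (qbinom q n k * q ^ ('C(k, 2)%:Z - (n * k)%:Z)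
                        * (- b) ^+ k * qpoch a q k / qpoch c q k) k)
          (Phi3 q (a * q ^+ k) a' b b' (c * q ^+ k)) m l)).
Proof.
move=> hq0 hq1 hc.
have qnz : q != 0 by rewrite -normr_gt0.
have Q := Qnz _ _ hq1.
have Cnz : forall k j, qpoch (c * q ^+ k) q j != 0.
  by move=> k j; have := hc (k + j)%N; rewrite qpochD mulf_eq0 negb_or => /andP[].
have qfnz : forall m k, (k <= m)%N -> qf _ q m k != 0.
  by move=> m k hk; have := Q m; rewrite (Qsplit _ q m k hk) mulf_eq0 negb_or => /andP[].
split; apply: functional_extensionality => m; apply: functional_extensionality => l.
- under eq_bigr => k _ do rewrite xmon_mul.
  pose Com := qpoch a q m * qpoch a' q l * qpoch b' q l / (qpoch q q l * qpoch c q (m + l)) / qpoch q q m.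
  transitivity (\sum_(k < n.+1) Com * (gauss _ q n k * qf _ q m k * q ^+ (2 * 'C(k, 2)) * b ^+ k * qpoch (b * q ^+ k) q (m - k))).
    by rewrite -mulr_sumr -identI /Phi3 /Com; field; rewrite !Q hc.
  apply: eq_bigr => k _; case: (leqP k m) => hk.
    have hkn : (k <= n)%N by rewrite -ltnS.
    rewrite /Phi3 /Com (qbinom_gauss _ _ _ _ Q hkn) (qpochDk _ q a _ _ hk) (qpochDc _ q c _ _ l hk) (Qsplit _ q m k hk).
    by field; rewrite Cnz !Q hc qfnz.
  by rewrite (qf_gt _ q m k hk) !mulr0 !mul0r mulr0.
- under eq_bigr => k _ do rewrite xmon_mul.
  pose Com := qpoch a q m * qpoch a' q l * qpoch b' q l / (qpoch q q l * qpoch c q (m + l)) / qpoch q q m.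
  transitivity (\sum_(k < n.+1) Com * (gauss _ q n k * qf _ q m k * q ^+ 'C(k, 2) * (- (b * q ^- n)) ^+ k * qpoch (b * q ^- n * q ^+ n) q (m - k))).
    by rewrite -mulr_sumr -identII /Phi3 /Com; field; rewrite !Q hc.
  apply: eq_bigr => k _; case: (leqP k m) => hk.
    have hkn : (k <= n)%N by rewrite -ltnS.
    rewrite /Phi3 /Com (qbinom_gauss _ _ _ _ Q hkn) (qpochDk _ q a _ _ hk) (qpochDc _ q c _ _ l hk) (Qsplit _ q m k hk).
    rewrite divfK ?expf_neq0 // expfzDr // -exprnN -mulNr exprMn exprVn -exprM.
    have -> : q ^ ('C(k, 2))%:Z = q ^+ 'C(k, 2) by [].
    by field; rewrite Cnz !Q hc qfnz // expf_neq0.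
  by rewrite (qf_gt _ q m k hk) !mulr0 !mul0r mulr0.
Qed.
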